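(* Let $T$ be a rooted binary tree in which every internal node has exactly two children, with $n\ge1$ leaves. Let $E$ be the set of all seed letters of $T$ (subsets of nodes containing all leaves and closed under taking descendants), and let $\mathcal{I}\subseteq 2^E$ be the family of hierarchical seed alphabets, i.e. subsets $X\subseteq E$ totally ordered by inclusion. Then $\mathcal{I}$ is a constrained independence system, namely: (i) $\emptyset\in\mathcal{I}$; (ii) if $X\in\mathcal{I}$ and $Y\subseteq X$ then $Y\in\mathcal{I}$; (iii) if $X,Y\in\mathcal{I}$ with $|Y|<|X|$, then there exists $e\in E\setminus Y$ with $Y\cup\{e\}\in\mathcal{I}$; (iv) every inclusion-minimal set in $2^E\setminus\mathcal{I}$ has cardinality exactly two. *)

(* Defs.v *)
From HB Require Import structures.
From mathcomp Require Import all_boot.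
Set Implicit Arguments. Unset Strict Implicit. Unset Printing Implicit Defensive.

(* Full rooted binary trees: every internal node has exactly two children.
   Such a tree always has n >= 1 leaves. *)
Inductive btree : Type := Leaf | Node of btree & btree.

(* Nodes are addressed by their path from the root (false = left, true = right). *)
Fixpoint nodes (t : btree) : seq (seq bool) :=
  match t with
  | Leaf => [:: [::]]
  | Node l r => [::] :: (map (cons false) (nodes l) ++ map (cons true) (nodes r))
  end.

Fixpoint leaves (t : btree) : seq (seq bool) :=
  match t with
  | Leaf => [:: [::]]
  | Node l r => map (cons false) (leaves l) ++ map (cons true) (leaves r)
  end.

Definition node (t : btree) : finType := seq_sub (nodes t).

Definition descendant (t : btree) (u v : node t) : bool := prefix (val u) (val v).

Definition seed_letter (t : btree) (S : {set node t}) : bool :=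
  [forall v : node t, (val v \in leaves t) ==> (v \in S)] &&
  [forall u : node t, forall v : node t, ((u \in S) && descendant u v) ==> (v \in S)].

Definition seed_letters (t : btree) : {set {set node t}} :=
  [set S | seed_letter S].

Definition hierarchical (t : btree) (X : {set {set node t}}) : bool :=
  (X \subset seed_letters t) &&
  [forall A in X, forall B in X, (A \subset B) || (B \subset A)].

Definition hier_alphabets (t : btree) : {set {set {set node t}}} :=
  [set X | hierarchical X].

(* Main.v *)
Require Import Defs.
From HB Require Import structures.
From mathcomp Require Import all_boot.
Set Implicit Arguments. Unset Strict Implicit. Unset Printing Implicit Defensive.

Section S.
Variable t : btree.
Local Notation nt := (node t).
Local Notation E := (seed_letters t).
Local Notation I := (hier_alphabets t).

Lemma seedP (S : {set nt}) :
  reflect ((forall v : nt, val v \in leaves t -> v \in S) /\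
           (forall u v : nt, u \in S -> descendant u v -> v \in S))
          (S \in E).
Proof.
rewrite inE /seed_letter; apply: (iffP andP) => [[/forallP H1 /forallP H2]|[H1 H2]]; split.
- by move=> v /(implyP (H1 v)).
- by move=> u v Hu Hd; have /forallP/(_ v)/implyP := H2 u; apply; rewrite Hu.
- by apply/forallP => v; apply/implyP; apply: H1.
- by apply/forallP => u; apply/forallP => v; apply/implyP => /andP[]; apply: H2.
Qed.

Lemma hierP (X : {set {set nt}}) :
  reflect (X \subset E /\ forall A B, A \in X -> B \in X -> (A \subset B) || (B \subset A))
          (X \in I).
Proof.
rewrite inE /hierarchical; apply: (iffP andP) => [[H1 /forall_inP H2]|[H1 H2]]; split => //.
- by move=> A B HA HB; have /forall_inP := H2 A HA; apply.
- by apply/forall_inP => A HA; apply/forall_inP => B HB; apply: H2.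
Qed.

Lemma seedT : [set: nt] \in E.
Proof. by apply/seedP; split=> *; rewrite inE. Qed.

Definition bot : {set nt} := \bigcap_(S in E) S.

Lemma bot_sub S : S \in E -> bot \subset S.
Proof. by move=> HS; apply: (bigcap_inf _ HS). Qed.

Lemma seed_bot : bot \in E.
Proof.
apply/seedP; split.
- move=> v Hv; apply/bigcapP => S /seedP[H1 _]; exact: H1.
- move=> u v /bigcapP Hu Hd; apply/bigcapP => S HS.
  by case/seedP: (HS) => _ H2; apply: H2 (Hu S HS) Hd.
Qed.

Lemma step A B : A \in E -> B \in E -> A \proper B ->
  exists e, [/\ e \in E, A \subset e, e \subset B & #|e| = #|A|.+1].
Proof.
move=> HA HB /properP[sAB [v0 v0B v0A]].
have P0 : v0 \in B :\: A by rewrite inE v0A v0B.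
case: (arg_maxnP (fun v : nt => size (val v)) P0) => v /setDP[vB vA] Hmax.
exists (v |: A); split.
- case/seedP: HA => H1 H2; case/seedP: HB => _ H2B; apply/seedP; split.
  + by move=> w Hw; rewrite inE H1 ?orbT.
  + move=> u w; rewrite in_setU1 => /orP[/eqP->|uA] Hd; last by rewrite in_setU1 (H2 u) ?orbT.
    rewrite in_setU1; case wA: (w \in A); first by rewrite orbT.
    have wB : w \in B by apply: H2B vB Hd.
    have : w \in B :\: A by rewrite inE wA wB.
    move/Hmax => Hle; move: Hd; rewrite /descendant prefixE => /eqP Ht.
    have Hs : size (val v) <= size (val w) by rewrite -Ht size_take; exact: geq_minr.
    have Es : size (val v) = size (val w) by apply/eqP; rewrite eqn_leq Hs; exact: Hle.
    by move: Ht; rewrite Es take_size => Ht; apply/orP; left; apply/eqP/val_inj.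
- exact: subsetUr.
- by rewrite subUset sub1set vB.
- by rewrite cardsU1 vA.
Qed.

Lemma chain_card_inj (X : {set {set nt}}) : X \in I ->
  {in enum X &, injective (fun S : {set nt} => #|S|)}.
Proof.
case/hierP => _ H A B; rewrite !mem_enum => HA HB Hc.
case/orP: (H A B HA HB) => Hs; apply/eqP.
  by rewrite eqEcard Hs Hc leqnn.
by rewrite eq_sym eqEcard Hs Hc leqnn.
Qed.

Definition L := #|bot|.
Definition N := #|nt|.

Lemma LN : L <= N.
Proof. exact: max_card. Qed.

Lemma upper X : X \in I -> #|X| <= N.+1 - L.
Proof.
move=> HX; rewrite cardE -(size_map (fun S : {set nt} => #|S|)).
have -> : N.+1 - L = size (iota L (N.+1 - L)) by rewrite size_iota.
apply: uniq_leq_size.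
  by rewrite map_inj_in_uniq ?enum_uniq //; apply: chain_card_inj.
move=> m /mapP[S]; rewrite mem_enum => HS ->; rewrite mem_iota subnKC; last first.
  by apply: leq_trans LN _.
case/hierP: HX => /subsetP sXE _.
by rewrite ltnS max_card andbT; apply: subset_leq_card; apply: bot_sub; apply: sXE.
Qed.

Lemma lower Y : Y \in I ->
  (forall e, e \in E -> e \notin Y -> e |: Y \notin I) -> N.+1 - L <= #|Y|.
Proof.
move=> HY Hmax.
have closeY : forall e, e \in E -> (forall Z, Z \in Y -> (Z \subset e) || (e \subset Z)) -> e \in Y.
  move=> e He Hc; apply/negPn/negP => eY; case/negP: (Hmax e He eY).
  case/hierP: HY => sYE HYc; apply/hierP; split.
    by rewrite subUset sub1set He sYE.
  move=> A B; rewrite !inE => /orP[/eqP->|HA] /orP[/eqP->|HB].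
  - by rewrite subxx.
  - by rewrite orbC; apply: Hc.
  - exact: Hc.
  - exact: HYc.
case/hierP: (HY) => /subsetP sYE HYc.
have cov : forall i, L + i <= N -> exists2 S, S \in Y & #|S| = L + i.
  elim=> [|i IH] Hi.
    exists bot; last by rewrite addn0.
    by apply: closeY seed_bot _ => Z HZ; rewrite bot_sub ?orbT // sYE.
  have Hi' : L + i <= N by apply: ltnW; rewrite -addnS.
  case: (IH Hi') => S SY HS.
  have TY : [set: nt] \in Y by apply: closeY seedT _ => Z _; rewrite subsetT.
  have P0 : [set: nt] \in [pred Z | (Z \in Y) && (S \proper Z)].
    rewrite inE TY properT /=; apply/eqP => ST; move: Hi; rewrite addnS -HS ST cardsT /N.
    by rewrite ltnn.
  case: (arg_minnP (fun Z : {set nt} => #|Z|) P0) => B /andP[BY SB] Bmin.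
  case: (step (sYE _ SY) (sYE _ BY) SB) => e [eE Se eB ce].
  exists e; last by rewrite ce HS addnS.
  apply: closeY eE _ => Z ZY.
  case/orP: (HYc Z S ZY SY) => HZS; first by rewrite (subset_trans HZS Se).
  case: (eqVneq S Z) => [<-|nSZ]; first by rewrite Se.
  have SZ : S \proper Z by rewrite properEneq nSZ HZS.
  have cB : #|B| <= #|Z| by apply: Bmin; apply/andP.
  case/orP: (HYc Z B ZY BY) => HZB.
    have -> : Z = B by apply/eqP; rewrite eqEcard HZB cB.
    by rewrite eB orbT.
  by rewrite (subset_trans eB HZB) orbT.
rewrite cardE -(size_map (fun S : {set nt} => #|S|)).
have -> : N.+1 - L = size (iota L (N.+1 - L)) by rewrite size_iota.
apply: uniq_leq_size; first exact: iota_uniq.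
move=> m; rewrite mem_iota subnKC; last by apply: leq_trans LN _.
case/andP => Hl Hu; have := cov (m - L); rewrite subnKC // => /(_ Hu) [S SY <-].
by apply: map_f; rewrite mem_enum.
Qed.

End S.

Theorem mainTheorem3 (T : btree) :
  let E := seed_letters T in
  let I := hier_alphabets T in
  (* (i) *) set0 \in I /\
  (* (ii) *) (forall X Y : {set {set node T}}, X \in I -> Y \subset X -> Y \in I) /\
  (* (iii) *) (forall X Y : {set {set node T}}, X \in I -> Y \in I -> #|Y| < #|X| ->
                exists2 e, e \in E :\: Y & e |: Y \in I) /\
  (* (iv) *) (forall X : {set {set node T}},
                minset (fun Z : {set {set node T}} => (Z \subset E) && (Z \notin I)) X ->
                #|X| = 2).
Proof.
move=> E I; split; [|split; [|split]].
- by apply/hierP; split; [exact: sub0set | move=> A B; rewrite inE].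
- move=> X Y /hierP[sXE HX] sYX; apply/hierP; split; first exact: subset_trans sYX sXE.
  by move=> A B HA HB; apply: HX; apply: (subsetP sYX).
- move=> X Y HX HY lt.
  case: (pickP [pred e | (e \in E :\: Y) && (e |: Y \in I)]) => [e /andP[]|H].
    by exists e.
  have : (N T).+1 - L T <= #|Y|.
    apply: lower HY _ => e eE eY; have := H e; rewrite /= inE eE eY /=.
    by move=> ->.
  move=> le; have := upper HX; move=> ue.
  by have := leq_ltn_trans (leq_trans ue le) lt; rewrite ltnn.
- move=> X /minsetP[/andP[sXE nXI] Hmin].
  have : ~ (forall A B, A \in X -> B \in X -> (A \subset B) || (B \subset A)).
    by move=> H; move/negP: nXI; apply; apply/hierP.
  move=> Hn.
  have [A [B [HA HB Hab]]] : exists A B, [/\ A \in X, B \in X & ~~ ((A \subset B) || (B \subset A))].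
    case: (pickP [pred p : {set node T} * {set node T} | [&& p.1 \in X, p.2 \in X &
             ~~ ((p.1 \subset p.2) || (p.2 \subset p.1))]]) => [[A B] /and3P[HA HB Hab]|H].
      by exists A, B.
    exfalso; apply: Hn => A B HA HB; have := H (A, B); rewrite /= HA HB /=.
    by move/negbFE.
  have sZX : [set A; B] \subset X by rewrite subUset !sub1set HA HB.
  have <- : [set A; B] = X.
    apply: (Hmin _ _ sZX); apply/andP; split; first exact: subset_trans sZX sXE.
    apply/negP => /hierP[_ Hc]; move/negP: Hab; apply; apply: Hc; rewrite !inE eqxx ?orbT //.
  rewrite cards2; case: eqP => // eAB; move: Hab; rewrite eAB subxx //.
Qed.
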